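(* Let $G=(V,E)$ be a finite graph and consider the graphical representation of the rescaled SEIS process on $G$ with parameters $\lambda>0,\tau>0$. Then for each $T>0$, with probability tending to $1$ as $\tau\to\infty$, the following holds: for every onset label $\star$ at a point $(x,t)\in\mathcal{S}$ with $t\le T$ there is a $t'>t$ and a recovery label $\times$ at $(x,t')$ such that there are no onset labels in $V\times(t,t']$.
   Context: The spacetime set is $\mathcal{S}=V\times[0,\infty)$. The graphical representation of the rescaled SEIS process consists of independent Poisson point processes along the fibres: at each site $x\in V$, recovery labels $\times$ with intensity $\tau$ and onset labels $\star$ with intensity $1$; along each edge $xy\in E$, transmission labels $\leftrightarrow$ with intensity $\lambda\tau$. *)

(* Defs.v *)
From HB Require Import structures.
From mathcomp Require Import all_boot all_order all_algebra.
From mathcomp Require Import all_classical all_reals all_analysis.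
From Stdlib Require List.
Set Implicit Arguments. Unset Strict Implicit. Unset Printing Implicit Defensive.
Import Order.TTheory GRing.Theory Num.Theory.
Local Open Scope classical_set_scope.
Local Open Scope ring_scope.

(* Kinds of Poisson processes in the graphical representation of the SEIS
   process on a finite graph G = (V, Ed), Ed a set of 2-element subsets of V:
   recovery labels at sites, onset labels at sites, transmission labels on edges. *)
Inductive plabel (V : finType) :=
  | Recov of V
  | Onset of V
  | Trans of {set V}.

Definition plabel_valid (V : finType) (Ed : {set {set V}}) (l : plabel V) : Prop :=
  match l with
  | Recov _ => True
  | Onset _ => True
  | Trans e => e \in Ed
  end.

Definition plabel_rate (R : realType) (V : finType) (lam tau : R)
    (l : plabel V) : R :=
  match l with
  | Recov _ => tau
  | Onset _ => 1
  | Trans _ => lam * tau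
  end.

Definition mutually_independent d (Omega : measurableType d) (R : realType)
    (P : probability Omega R) (I : Type) (valid : I -> Prop)
    (X : I -> Omega -> R) : Prop :=
  forall (s : seq I) (B : I -> set R),
    List.NoDup s ->
    (forall i, List.In i s -> valid i /\ measurable (B i)) ->
    P (\bigcap_(i in [set i | List.In i s]) (X i @^-1` B i)) =
    (\prod_(i <- s) P (X i @^-1` B i))%E.

(* A graphical representation of the rescaled SEIS process with parameters
   lam, tau on the probability space (Omega, P): each Poisson process on
   [0, oo) is given by its i.i.d. exponential inter-arrival times
   gap l 0, gap l 1, ...; all inter-arrival times of all processes are
   mutually independent. *)
Record graphical_rep d (Omega : measurableType d) (R : realType)
    (P : probability Omega R) (V : finType) (Ed : {set {set V}})
    (lam tau : R) := GraphicalRep {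
  gap : plabel V -> nat -> Omega -> R ;
  gap_measurable : forall l n, plabel_valid Ed l ->
    measurable_fun setT (gap l n) ;
  gap_law : forall l n (B : set R), plabel_valid Ed l -> measurable B ->
    P (gap l n @^-1` B) = exponential_prob (plabel_rate lam tau l) B ;
  gap_indep : mutually_independent P
    (fun ln : plabel V * nat => plabel_valid Ed ln.1)
    (fun ln => gap ln.1 ln.2)
}.

(* time of the k-th (k = 0, 1, ...) point of process l *)
Definition arrival d (Omega : measurableType d) (R : realType)
    (P : probability Omega R) (V : finType) (Ed : {set {set V}}) (lam tau : R)
    (G : graphical_rep P Ed lam tau) (l : plabel V) (k : nat) (w : Omega) : R :=
  \sum_(j < k.+1) gap G l j w.

Definition has_label d (Omega : measurableType d) (R : realType)
    (P : probability Omega R) (V : finType) (Ed : {set {set V}}) (lam tau : R)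
    (G : graphical_rep P Ed lam tau) (l : plabel V) (w : Omega) (t : R) : Prop :=
  exists k, arrival G l k w = t.

Definition good_event d (Omega : measurableType d) (R : realType)
    (P : probability Omega R) (V : finType) (Ed : {set {set V}}) (lam tau : R)
    (G : graphical_rep P Ed lam tau) (T : R) : set Omega :=
  [set w | forall (x : V) (t : R), t <= T -> has_label G (Onset x) w t ->
     exists t', t < t' /\ has_label G (Recov x) w t' /\
       forall (y : V) (s : R), t < s -> s <= t' -> ~ has_label G (Onset y) w s].

(* Main.v *)
Require Import Defs.
From HB Require Import structures.
From mathcomp Require Import all_boot all_order all_algebra.
From mathcomp Require Import all_classical all_reals all_analysis.
From Stdlib Require List.
From mathcomp Require Import ring lra measurable_realfun.
Import Order.TTheory GRing.Theory Num.Theory.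
Local Open Scope classical_set_scope.
Local Open Scope ring_scope.
Set Implicit Arguments. Unset Strict Implicit. Unset Printing Implicit Defensive.
Section reals.
Variable R : realType.

Lemma bern (p : R) n : 0 <= p -> p <= 1 -> (1 - p) ^+ n * (1 + n%:R * p) <= 1.
Proof.
move=> p0 p1; elim: n => [|n IH]; first by rewrite expr0 mul1r mul0r addr0.
rewrite exprS -mulrA; apply: le_trans IH.
have h1 : 0 <= (1 - p) ^+ n by apply: exprn_ge0; rewrite subr_ge0.
move: h1; set q := (1 - p) ^+ n => h1.
rewrite -natr1 mulrDl mul1r.
have hn : 0 <= n%:R :> R by [].
have h2 : 0 <= q * (p * (n%:R * p + p)) by rewrite mulr_ge0 // mulr_ge0 // addr_ge0 // mulr_ge0.
nra.
Qed.

Lemma exp_prob_neg (r : R) : exponential_prob r `]-oo, 0[ = 0%E.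
Proof.
rewrite /exponential_prob integral0_eq // => x /=; rewrite in_itv /= => x0.
by rewrite lt0_exponential_pdf.
Qed.

Lemma exp_prob_le (r a : R) : 0 < r -> 0 < a ->
  exponential_prob r `]-oo, a] = (1 - (expR (- r * a))%:E)%E.
Proof.
move=> r0 a0.
have -> : [set` `]-oo, a]] = [set` `]-oo, 0[] `|` [set` `[0, a]] :> set R.
  apply/seteqP; split => x /=; rewrite !in_itv /=.
    by move=> xa; case: (ltP x 0) => x0; [left|right; rewrite xa andbT].
  by case=> [x0|/andP[_ ->]] //; apply: ltW; apply: lt_trans a0.
rewrite /exponential_prob ge0_integral_setU //=.
- rewrite -/(exponential_prob r _) exp_prob_neg add0e.
  by rewrite -/(exponential_prob r _) exponential_prob_itv0c.
- apply/measurable_EFinP; apply: measurable_funTS.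
  exact: measurable_exponential_pdf.
- by move=> x _; rewrite lee_fin exponential_pdf_ge0 // ltW.
- apply/disj_setPS => x [/=]; rewrite !in_itv /= => x0 /andP[x0' _].
  by move: (lt_le_trans x0 x0'); rewrite ltxx.
Qed.

Lemma exp_prob_itv_le (a b : R) : a <= b ->
  (exponential_prob 1 `[a, b] <= (b - a)%:E)%E.
Proof.
move=> ab; rewrite /exponential_prob.
apply: (@le_trans _ _ (\int[lebesgue_measure]_(x in `[a, b]) (cst 1%E x))%E).
  apply: ge0_le_integral => //.
  - by move=> x _; rewrite lee_fin exponential_pdf_ge0.
  - apply/measurable_EFinP; apply: measurable_funTS.
    exact: measurable_exponential_pdf.
  - move=> x _; rewrite lee_fin /exponential_pdf patchE.
    case: ifPn => //; rewrite inE /= in_itv /= andbT => x0.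
    by rewrite mul1r mulN1r expR_le1 oppr_le0.
rewrite integral_cst // mul1e.
have H := lebesgue_measure_itv `[a, b]; rewrite /= in H.
apply: le_trans; first by rewrite le_eqVlt; apply/orP; left; apply/eqP; exact: H.
by case: (a%:E < b%:E)%E; rewrite ?EFinN ?lee_fin ?subr_ge0.
Qed.
End reals.

Section arith.
Variable R : realType.

Lemma arith1 (n0 e p : R) : 0 <= n0 -> 0 < e -> 0 < p -> p <= 1 ->
  n0 * (1 - p) ^+ (Num.truncn (n0 / (e * p))).+1 <= e.
Proof.
move=> n00 e0 p0 p1.
set M := Num.truncn (n0 / (e * p)).
have hM : n0 / (e * p) < M.+1%:R by apply: truncnS_gt.
have hM' : n0 < M.+1%:R * (e * p) by rewrite -ltr_pdivrMr // mulr_gt0.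
have hb := bern M.+1 (ltW p0) p1.
set Q := (1 - p) ^+ M.+1 in hb *.
have Q0 : 0 <= Q by apply: exprn_ge0; lra.
set m := M.+1%:R in hM' hb *.
have h1 : n0 * Q <= m * (e * p) * Q by apply: ler_wpM2r => //; apply: ltW.
have h2 : m * p * Q <= 1 by nra.
nra.
Qed.

Lemma arith23 (D e : R) : 0 <= D -> 0 < e -> e / (D + e) * D <= e.
Proof.
move=> D0 e0; rewrite mulrAC ler_pdivrMr; last lra.
nra.
Qed.

Lemma arith4 (A L E u e : R) : 0 <= A -> 0 <= E -> 1 <= u -> u ^+ 3 * E * u = 1 ->
  L <= u ^+ 3 + 1 -> 2 * A <= e * u -> A * L * E <= e.
Proof.
move=> A0 E0 u1 hE hL hA.
have u0 : 0 < u by lra.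
have h3 : 1 <= u ^+ 3 by apply: exprn_ege1.
set w := u ^+ 3 in hE hL h3.
have hL2 : L <= 2 * w by lra.
have h4 : A * L * E <= A * (2 * w) * E.
  by apply: ler_wpM2r => //; apply: ler_wpM2l.
have h5 : u * (A * (2 * w) * E) = 2 * A.
  by transitivity (2 * A * (w * E * u)); [ring|rewrite hE mulr1].
suff : u * (A * L * E) <= u * e by rewrite ler_pM2l.
apply: le_trans (_ : u * (A * (2 * w) * E) <= _).
  by apply: ler_wpM2l => //; lra.
rewrite h5; lra.
Qed.

Lemma arith5 (A Y L q u e : R) : 0 <= A -> 0 <= Y -> 0 <= q -> 1 <= u ->
  q * u ^+ 2 = 1 -> u ^+ 3 < L -> Y * (1 + L * q) <= 1 -> 2 * A <= e * u ->
  A * Y <= e.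
Proof.
move=> A0 Y0 q0 u1 hq hL hY hA.
have u0 : 0 < u by lra.
have h3 : u ^+ 3 * q = u.
  by transitivity (u * (q * u ^+ 2)); [rewrite exprS; ring|rewrite hq mulr1].
have hLq : u <= L * q by rewrite -h3; apply: ler_wpM2r => //; apply: ltW.
have hYu : Y * u <= 1.
  apply: le_trans (_ : Y * (1 + L * q) <= 1) => //.
  by apply: ler_wpM2l => //; lra.
suff : u * (A * Y) <= u * e by rewrite ler_pM2l.
have : A * (Y * u) <= A by rewrite -[X in _ <= X]mulr1; apply: ler_wpM2l.
nra.
Qed.

Lemma fin_arith (a b c d e x eps : R) : 0 < eps -> a <= eps / 5 ->
  b + c <= eps / 5 -> d <= eps / 5 -> e <= eps / 5 ->
  x <= a + b + c + d + e -> 1 - eps <= 1 - x.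
Proof. move=> *; lra. Qed.

End arith.

Definition plenc (V : finType) (l : plabel V) : (V + V) + {set V} :=
  match l with Recov x => inl (inl x) | Onset x => inl (inr x) | Trans e => inr e end.
Definition pldec (V : finType) (c : (V + V) + {set V}) : plabel V :=
  match c with inl (inl x) => Recov x | inl (inr x) => Onset x | inr e => Trans e end.
Lemma plencK (V : finType) : cancel (@plenc V) (@pldec V).
Proof. by case. Qed.
HB.instance Definition _ (V : finType) := Equality.copy (plabel V) (can_type (@plencK V)).

Lemma In_mem (T : eqType) (x : T) s : List.In x s <-> x \in s.
Proof.
elim: s => [|a s IH] //=; rewrite in_cons; split.
  by case=> [->|/IH ->]; rewrite ?eqxx ?orbT.
by case/orP => [/eqP ->|/IH]; [left|right].
Qed.

Lemma uniq_NoDup (T : eqType) (s : seq T) : uniq s -> List.NoDup s.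
Proof.
elim: s => [|a s IH] /=; first by constructor.
case/andP => Has Hs; constructor; last exact: IH.
by move/In_mem; apply/negP.
Qed.

Lemma bigcap_In_cons (T I : Type) (F : I -> set T) a s :
  \bigcap_(i in [set i | List.In i (a :: s)]) F i =
  F a `&` \bigcap_(i in [set i | List.In i s]) F i.
Proof.
apply/seteqP; split => w /=.
  by move=> H; split; [apply: H; left|move=> i Hi; apply: H; right].
by case=> Ha Hs i [<-|Hi] //; apply: Hs.
Qed.

Lemma bigcap_In_nil (T I : Type) (F : I -> set T) :
  \bigcap_(i in [set i | List.In i [::]]) F i = setT.
Proof. by apply/seteqP; split => w //= _ i. Qed.

Lemma bigcap_In_measurable d (T : measurableType d) (I : Type) (F : I -> set T) s :
  (forall i, List.In i s -> measurable (F i)) ->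
  measurable (\bigcap_(i in [set i | List.In i s]) F i).
Proof.
elim: s => [|a s IH] H; first by rewrite bigcap_In_nil.
rewrite bigcap_In_cons; apply: measurableI; first by apply: H; left.
by apply: IH => i Hi; apply: H; right.
Qed.

Section main.
Variables (R : realType) (V : finType) (Ed : {set {set V}}) (lam tau : R)
  (d : measure_display) (Omega : measurableType d) (P : probability Omega R)
  (G : graphical_rep P Ed lam tau).

Definition X (i : plabel V * nat) := gap G i.1 i.2.
Definition valid (i : plabel V * nat) := plabel_valid Ed i.1.

Lemma X_meas i B : valid i -> measurable B -> measurable (X i @^-1` B).
Proof.
move=> Hv mB; have := gap_measurable G i.2 Hv measurableT mB.
by rewrite setTI.
Qed.

Lemma P_fin A : measurable A -> (fine (P A))%:E = P A.
Proof.
move=> mA; apply: fineK; rewrite ge0_fin_numE //.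
by apply: le_lt_trans (probability_le1 P mA) _; rewrite ltry.
Qed.

Lemma P_ge0 A : (0 <= fine (P A))%R.
Proof. by apply: fine_ge0. Qed.

Definition Gs (s : seq (plabel V * nat)) : set (set Omega) :=
  [set E | exists B : plabel V * nat -> set R, (forall i, measurable (B i)) /\
     E = \bigcap_(i in [set i | List.In i s]) (X i @^-1` B i)].

Lemma indep_cond s i0 B0 A : uniq (i0 :: s) ->
  (forall i, i \in i0 :: s -> valid i) -> measurable B0 ->
  <<s Gs s >> A -> P (A `&` X i0 @^-1` B0) = (P A * P (X i0 @^-1` B0))%E.
Proof.
move=> Hu Hv mB0 HA.
have mC : measurable (X i0 @^-1` B0) by apply: X_meas => //; apply: Hv; rewrite mem_head.
pose m1 := mrestr P mC.
pose m2 := mscale (NngNum (P_ge0 (X i0 @^-1` B0))) P.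
have Hs i : List.In i s -> valid i.
  by move/In_mem => H; apply: Hv; rewrite in_cons H orbT.
suff : m1 A = m2 A.
  rewrite /m1 /m2 /mrestr /mscale /= => ->.
  by rewrite P_fin // muleC.
apply: (@g_sigma_algebra_measure_unique _ _ _ (Gs s) _ (fun _ => setT)) => //.
- move=> E [B [mB ->]]; apply: bigcap_In_measurable => i Hi.
  by apply: X_meas => //; apply: Hs.
- move=> _; exists (fun _ => setT); split => //.
  by apply/seteqP; split => w //= _ i _.
- by apply/seteqP; split => w // _; exists 0%N.
- move=> E F [B [mB ->]] [B' [mB' ->]]; exists (fun i => B i `&` B' i); split.
    by move=> i; apply: measurableI.
  by rewrite -bigcapI; apply: eq_bigcapr => i _; rewrite preimage_setI.
- move=> E [B [mB ->]].
  change (P (\bigcap_(i in [set i | List.In i s]) X i @^-1` B i `&` X i0 @^-1` B0) =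
    ((fine (P (X i0 @^-1` B0)))%:E * P (\bigcap_(i in [set i | List.In i s]) X i @^-1` B i))%E).
  rewrite P_fin //.
  pose B' i := if i == i0 then B0 else B i.
  have HE : \bigcap_(i in [set i | List.In i s]) X i @^-1` B i `&` X i0 @^-1` B0 =
      \bigcap_(i in [set i | List.In i (i0 :: s)]) X i @^-1` B' i.
    rewrite bigcap_In_cons setIC /B' eqxx; congr (_ `&` _).
    apply: eq_bigcapr => i /= /In_mem Hi; case: eqP => // Ei.
    by move: Hu; rewrite /= -Ei Hi.
  rewrite HE (gap_indep G (B:=B') (uniq_NoDup Hu)); last first.
    move=> i /In_mem Hi; split; first exact: Hv.
    by rewrite /B'; case: eqP.
  rewrite big_cons /B' eqxx; congr (_ * _)%E.
  rewrite /X (gap_indep G (s:=s) (B:=B)); last 2 first.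
  + by move: Hu => /= /andP[_]; apply: uniq_NoDup.
  + by move=> i Hi; split; [apply: Hs|].
  rewrite big_seq_cond [RHS]big_seq_cond; apply: eq_bigr => i /andP[Hi _].
  by case: eqP => // Ei; move: Hu; rewrite /= -Ei Hi.
- by move=> _; apply: le_lt_trans (probability_le1 P _) _; rewrite ?ltry //; exact: measurableI.
Qed.

Lemma P_bigU (I : Type) (s : seq I) (F : I -> set Omega) :
  (forall i, measurable (F i)) ->
  (P (\big[setU/set0]_(i <- s) F i) <= \sum_(i <- s) P (F i))%E.
Proof.
move=> mF; elim: s => [|a s IH]; first by rewrite !big_nil measure0.
rewrite !big_cons; apply: le_trans (measureU2 _ _ _) _ => //.
  by apply: bigsetU_measurable => i _.
by apply: leeD.
Qed.

Lemma sum_le_const (I : Type) (s : seq I) (f : I -> \bar R) (c : R) :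
  (forall i, (f i <= c%:E)%E) -> (\sum_(i <- s) f i <= ((size s)%:R * c)%:E)%E.
Proof.
move=> H; elim: s => [|a s IH]; first by rewrite big_nil mul0r.
rewrite big_cons /= -natr1 mulrDl mul1r addrC EFinD; exact: leeD.
Qed.

Lemma sum_le_const2 (I : Type) (s : seq I) (f : I -> \bar R) (c : R) n :
  size s = n -> (forall i, (f i <= c%:E)%E) -> (\sum_(i <- s) f i <= (n%:R * c)%:E)%E.
Proof. by move=> <-; apply: sum_le_const. Qed.

Lemma Gs_X_meas s i : List.In i s ->
  measurable_fun (setT : set (g_sigma_algebraType (Gs s))) (X i : g_sigma_algebraType (Gs s) -> R).
Proof.
move=> Hi _ B mB; rewrite setTI; apply: sub_sigma_algebra.
exists (fun j => if j == i then B else setT); split.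
  by move=> j; case: eqP.
apply/seteqP; split => w /=.
  by move=> Hw j _; case: eqP => [->|].
by move=> /(_ i Hi); rewrite eqxx.
Qed.

Lemma Gs_sum_meas s (h : nat -> plabel V * nat) (l : seq nat) :
  (forall n, n \in l -> List.In (h n) s) ->
  measurable_fun (setT : set (g_sigma_algebraType (Gs s)))
    ((fun w => \sum_(n <- l) X (h n) w) : g_sigma_algebraType (Gs s) -> R).
Proof.
elim: l => [|a l IH] H.
  by under eq_fun do rewrite big_nil; exact: measurable_cst.
under eq_fun do rewrite big_cons.
apply: measurable_funD; first by apply: Gs_X_meas; apply: H; rewrite mem_head.
by apply: IH => n Hn; apply: H; rewrite in_cons Hn orbT.
Qed.


Lemma meas_pre (f : Omega -> R) D : measurable_fun setT f -> measurable D ->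
  measurable (f @^-1` D).
Proof. by move=> mf mD; have := mf measurableT _ mD; rewrite setTI. Qed.

Lemma gap_on_meas z n : measurable_fun setT (gap G (Onset z) n).
Proof. exact: (gap_measurable G n (l:=Onset z) I). Qed.

Lemma gap_rec_meas z n : measurable_fun setT (gap G (Recov z) n).
Proof. exact: (gap_measurable G n (l:=Recov z) I). Qed.

Lemma sum_gap_meas l (Hl : plabel_valid Ed l) (r : seq nat) :
  measurable_fun setT (fun w => \sum_(i <- r) gap G l i w).
Proof. by apply: measurable_sum => i; apply: gap_measurable. Qed.

Lemma sum_ordE (F : nat -> R) n : \sum_(i < n) F i = \sum_(i <- iota 0 n) F i.
Proof. by rewrite -(big_mkord xpredT) /index_iota subn0. Qed.

Definition Wd x k y j w :=
  arrival G (Onset x) k w - \sum_(i < j) gap G (Onset y) i w.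

Definition cell (a dl : R) (m : nat) : set R := `[a + m%:R * dl, a + m.+1%:R * dl[.
Definition Icell (a dl : R) (m : nat) : set R := `[a + m%:R * dl - dl, a + m%:R * dl + 2 * dl].

Definition Bdiff x k y j a dl M :=
  \big[setU/set0]_(m < M) (Wd x k y j @^-1` cell a dl m `&`
     gap G (Onset y) j @^-1` Icell a dl m).

Lemma Wd_meas x k y j : measurable_fun setT (Wd x k y j).
Proof.
apply: measurable_funB.
  by rewrite /arrival; apply: measurable_sum => i; apply: gap_on_meas.
by apply: measurable_sum => i; apply: gap_on_meas.
Qed.

Lemma Bdiff_meas x k y j a dl M : measurable (Bdiff x k y j a dl M).
Proof.
apply: bigsetU_measurable => m _; rewrite /cell /Icell.
apply: measurableI; apply: meas_pre => //; [exact: Wd_meas|exact: gap_on_meas].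
Qed.

Lemma cell_disj (f : Omega -> R) a dl : 0 < dl ->
  trivIset setT (fun m => f @^-1` cell a dl m).
Proof.
move=> dl0 m n _ _ [w [H1 H2]]; move: H1 H2; rewrite /cell /= !in_itv /= => /andP[h1 h2] /andP[h3 h4].
have key : forall p q : nat, (p < q)%N -> a + p%:R * dl <= f w < a + p.+1%:R * dl ->
    a + q%:R * dl <= f w -> False.
  move=> p q pq /andP[_ hp] hq.
  have hh : p.+1%:R * dl <= q%:R * dl by rewrite ler_pM2r // ler_nat.
  lra.
case: (ltngtP m n) => // mn.
  by exfalso; apply: (key m n mn); rewrite ?h1 ?h2.
by exfalso; apply: (key n m mn); rewrite ?h3 ?h4.
Qed.

Lemma Bdiff_bound x k y j a dl M : x != y -> 0 < dl ->
  (P (Bdiff x k y j a dl M) <= (3 * dl)%:E)%E.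
Proof.
move=> xy dl0.
pose s := [seq (Onset x, i) | i <- iota 0 k.+1] ++ [seq (Onset y, i) | i <- iota 0 j].
pose i0 := (Onset y, j).
have inj1 : injective (fun i : nat => (Onset x, i)) by move=> ? ? [].
have inj2 : injective (fun i : nat => (Onset y, i)) by move=> ? ? [].
have Hu : uniq (i0 :: s).
  rewrite cons_uniq mem_cat negb_or cat_uniq !(map_inj_uniq _) ?iota_uniq //.
  have n1 : i0 \notin [seq (Onset x, i) | i <- iota 0 k.+1].
    by apply/mapP => -[i _ E]; case: E => E; move: xy; rewrite E eqxx.
  have n2 : i0 \notin [seq (Onset y, i) | i <- iota 0 j].
    apply/mapP => -[i Hi E]; case: E => E.
    by move: Hi; rewrite -E mem_iota add0n ltnn andbF.
  have nh : ~~ has (in_mem^~ (mem [seq (Onset x, i) | i <- iota 0 k.+1]))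
       [seq (Onset y, i) | i <- iota 0 j].
    apply/hasPn => _ /mapP [i _ ->]; apply/mapP => -[i' _ E]; case: E => E.
    by move: xy; rewrite E eqxx.
  by rewrite n1 n2 nh.
have Hv : forall i, i \in i0 :: s -> valid i.
  move=> [l n]; rewrite in_cons mem_cat => /orP [/eqP E | /orP [] /mapP [i _ E]];
    by case: E => -> _.
have EW : Wd x k y j = fun w => \sum_(n <- iota 0 k.+1) X ((fun i => (Onset x, i)) n) w -
    \sum_(n <- iota 0 j) X ((fun i => (Onset y, i)) n) w.
  apply/funext => w; rewrite /Wd /arrival (sum_ordE (fun i => gap G (Onset x) i w)).
  by rewrite (sum_ordE (fun i => gap G (Onset y) i w)).
have mW : measurable_fun (setT : set (g_sigma_algebraType (Gs s)))
    (Wd x k y j : g_sigma_algebraType (Gs s) -> R).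
  rewrite EW; apply: measurable_funB; apply: Gs_sum_meas => n Hn; apply/In_mem;
    rewrite mem_cat map_f ?orbT //.
have HW : forall m, <<s Gs s >> (Wd x k y j @^-1` cell a dl m).
  move=> m; have := mW measurableT _ (measurable_itv `[a + m%:R * dl, a + m.+1%:R * dl[).
  by rewrite setTI.
rewrite /Bdiff; apply: le_trans; first apply: P_bigU.
  move=> m; rewrite /cell /Icell; apply: measurableI; apply: meas_pre => //;
    [exact: Wd_meas|exact: gap_on_meas].
apply: (@le_trans _ _ (\sum_(m < M) (P (Wd x k y j @^-1` cell a dl m) * (3 * dl)%:E)%E)).
  apply: lee_sum => m _.
  have := indep_cond (B0 := Icell a dl m) Hu Hv _ (HW m); rewrite /X /= => ->; last first.
    exact: measurable_itv.
  apply: lee_wpmul2l => //.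
  rewrite (gap_law G j (l := Onset y) I); last exact: measurable_itv.
  rewrite /Icell /=; apply: le_trans (exp_prob_itv_le _) _.
    lra.
  by rewrite lee_fin; lra.
rewrite -ge0_sume_distrl // -(@measure_bigsetU _ _ _ P (fun m => Wd x k y j @^-1` cell a dl m)) //; last first.
- exact: cell_disj.
- by move=> m; apply: meas_pre; [exact: Wd_meas|exact: measurable_itv].
rewrite -[X in (_ <= X)%E]mul1e; apply: lee_wpmul2r; first by rewrite lee_fin; lra.
apply: probability_le1; apply: bigsetU_measurable => m _.
by apply: meas_pre; [exact: Wd_meas|exact: measurable_itv].
Qed.

Lemma prod_constE (I : Type) (s : seq I) (c : R) :
  (\prod_(i <- s) c%:E)%E = (c ^+ size s)%:E.
Proof.
elim: s => [|a s IH]; first by rewrite big_nil expr0.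
by rewrite big_cons IH /= exprS EFinM.
Qed.

Lemma P_bigI l (Hl : plabel_valid Ed l) (ns : seq nat) (B : set R) :
  uniq ns -> measurable B ->
  P (\big[setI/setT]_(n <- ns) gap G l n @^-1` B) =
  (\prod_(n <- ns) P (gap G l n @^-1` B))%E.
Proof.
move=> Hu mB.
have E : \big[setI/setT]_(n <- ns) gap G l n @^-1` B =
    \bigcap_(i in [set i | List.In i [seq (l, n) | n <- ns]]) X i @^-1` (fun _ => B) i.
  elim: ns {Hu} => [|a ns IH]; first by rewrite big_nil bigcap_In_nil.
  by rewrite big_cons /= bigcap_In_cons IH.
rewrite E /X (gap_indep G (B := fun _ => B)); last 2 first.
- by apply: uniq_NoDup; rewrite map_inj_uniq // => ? ? [].
- by move=> i /In_mem /mapP [n _ ->].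
by rewrite big_map.
Qed.

Lemma P_le_on y n (a : R) : 0 < a ->
  P (gap G (Onset y) n @^-1` `]-oo, a]) = (1 - (expR (- a))%:E)%E.
Proof.
move=> a0; rewrite (gap_law G n (l := Onset y) I) //=.
by rewrite exp_prob_le // mulN1r.
Qed.

Lemma P_le_rec (tau0 : 0 < tau) y n (a : R) : 0 < a ->
  P (gap G (Recov y) n @^-1` `]-oo, a]) = (1 - (expR (- tau * a))%:E)%E.
Proof. by move=> a0; rewrite (gap_law G n (l := Recov y) I) //= exp_prob_le. Qed.

Lemma P_gt_rec (tau0 : 0 < tau) y n (a : R) : 0 < a ->
  P (gap G (Recov y) n @^-1` `]a, +oo[) = (expR (- tau * a))%:E.
Proof.
move=> a0.
have -> : gap G (Recov y) n @^-1` `]a, +oo[ = ~` (gap G (Recov y) n @^-1` `]-oo, a]).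
  by rewrite preimage_setC setCitvl.
rewrite probability_setC; last by apply: meas_pre => //; exact: gap_rec_meas.
by rewrite P_le_rec // oppeB // addeA subee // add0e.
Qed.

Lemma PU2 (A B : set Omega) : measurable A -> measurable B ->
  (P (A `|` B) <= P A + P B)%E.
Proof. exact: measureU2. Qed.

Definition negR : set R := `]-oo, 0[.

Lemma P_neg l (Hl : plabel_valid Ed l) n :
  P (gap G l n @^-1` negR) = 0%E.
Proof. rewrite (gap_law G n Hl) /negR //; exact: exp_prob_neg. Qed.

Definition Bneg := \bigcup_n \big[setU/set0]_(z <- enum V)
  (gap G (Onset z) n @^-1` negR `|` gap G (Recov z) n @^-1` negR).
Definition Bcnt (T : R) N z := \big[setI/setT]_(n <- iota 0 N.+1) gap G (Onset z) n @^-1` `]-oo, T + 1].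
Definition Bsame (dl : R) N z := \big[setU/set0]_(n <- iota 0 N.+1) gap G (Onset z) n @^-1` `]-oo, dl].
Definition Mcells (T dl : R) := (Num.truncn ((2 * T + 2) / dl)).+1.
Definition Bdall (T dl : R) N := \big[setU/set0]_(x <- enum V) \big[setU/set0]_(y <- enum V)
   \big[setU/set0]_(k <- iota 0 N) \big[setU/set0]_(j <- iota 0 N)
   (if x == y then set0 else Bdiff x k y j (- (T + 1)) dl (Mcells T dl)).
Definition Bgap (dl : R) Mr z := \big[setU/set0]_(m <- iota 0 Mr) gap G (Recov z) m @^-1` `]dl, +oo[.
Definition Bblk (c : R) L z b := \big[setI/setT]_(m <- iota (b * L) L) gap G (Recov z) m @^-1` `]-oo, c].

Lemma Bneg_meas : measurable Bneg.
Proof.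
apply: bigcupT_measurable => n; apply: bigsetU_measurable => z _.
by apply: measurableU; apply: meas_pre; rewrite /negR //; [exact: gap_on_meas|exact: gap_rec_meas].
Qed.

Lemma Bneg_null : P Bneg = 0%E.
Proof.
apply/eqP; rewrite eq_le measure_ge0 andbT.
apply: le_trans (le_mu_bigcup _ _ _) _.
- move=> n; apply: bigsetU_measurable => z _.
  by apply: measurableU; apply: meas_pre; rewrite /negR //; [exact: gap_on_meas|exact: gap_rec_meas].
- exact: Bneg_meas.
rewrite eseries0 // => n _ _; apply/eqP; rewrite eq_le measure_ge0 andbT.
apply: le_trans; first apply: P_bigU.
  by move=> z; apply: measurableU; apply: meas_pre; rewrite /negR //; [exact: gap_on_meas|exact: gap_rec_meas].
rewrite big1 // => z _; apply/eqP; rewrite eq_le measure_ge0 andbT.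
apply: le_trans (PU2 _ _) _.
- by apply: meas_pre; rewrite /negR //; exact: gap_on_meas.
- by apply: meas_pre; rewrite /negR //; exact: gap_rec_meas.
by rewrite (P_neg (l := Onset z)) // (P_neg (l := Recov z)) // adde0.
Qed.

Lemma Bcnt_meas T N z : measurable (Bcnt T N z).
Proof. by apply: bigsetI_measurable => n _; apply: meas_pre => //; exact: gap_on_meas. Qed.

Lemma Bcnt_bound T N : 0 < T ->
  (P (\big[setU/set0]_(z <- enum V) Bcnt T N z) <=
   (#|V|%:R * (1 - expR (- (T + 1))) ^+ N.+1)%:E)%E.
Proof.
move=> T0; apply: le_trans; first by apply: P_bigU => z; apply: Bcnt_meas.
rewrite cardT; apply: sum_le_const => z.
rewrite /Bcnt P_bigI //; last exact: iota_uniq.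
have T1 : 0 < T + 1 by lra.
under eq_bigr do rewrite (P_le_on _ _ T1).
by rewrite -EFinB prod_constE size_iota.
Qed.

Lemma Bsame_meas dl N z : measurable (Bsame dl N z).
Proof. by apply: bigsetU_measurable => n _; apply: meas_pre => //; exact: gap_on_meas. Qed.

Lemma Bsame_bound dl N : 0 < dl ->
  (P (\big[setU/set0]_(z <- enum V) Bsame dl N z) <=
   (#|V|%:R * (N.+1%:R * dl))%:E)%E.
Proof.
move=> dl0; apply: le_trans; first by apply: P_bigU => z; apply: Bsame_meas.
rewrite cardT; apply: sum_le_const => z.
apply: le_trans; first by apply: P_bigU => n; apply: meas_pre => //; exact: gap_on_meas.
apply: (sum_le_const2 (size_iota 0 N.+1)) => n.
rewrite P_le_on // -EFinB lee_fin.
have := expR_ge1Dx (- dl); lra.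
Qed.

Lemma Bdall_meas T dl N : measurable (Bdall T dl N).
Proof.
do 4 (apply: bigsetU_measurable => ? _).
by case: ifP => _; [exact: measurable0|exact: Bdiff_meas].
Qed.

Lemma Bdall_bound T dl N : 0 < dl ->
  (P (Bdall T dl N) <= (#|V|%:R * (#|V|%:R * (N%:R * (N%:R * (3 * dl)))))%:E)%E.
Proof.
move=> dl0; rewrite cardT.
apply: le_trans; first apply: P_bigU.
  by move=> x; do 3 (apply: bigsetU_measurable => ? _); case: ifP => _;
    [exact: measurable0|exact: Bdiff_meas].
apply: sum_le_const => x.
apply: le_trans; first apply: P_bigU.
  by move=> y; do 2 (apply: bigsetU_measurable => ? _); case: ifP => _;
    [exact: measurable0|exact: Bdiff_meas].
apply: sum_le_const => y.
apply: le_trans; first apply: P_bigU.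
  by move=> k; do 1 (apply: bigsetU_measurable => ? _); case: ifP => _;
    [exact: measurable0|exact: Bdiff_meas].
apply: (sum_le_const2 (size_iota 0 N)) => k.
apply: le_trans; first apply: P_bigU.
  by move=> j; case: ifP => _; [exact: measurable0|exact: Bdiff_meas].
apply: (sum_le_const2 (size_iota 0 N)) => j.
case: ifPn => xy; first by rewrite measure0 lee_fin; lra.
exact: Bdiff_bound.
Qed.

Lemma Bgap_meas dl Mr z : measurable (Bgap dl Mr z).
Proof. by apply: bigsetU_measurable => n _; apply: meas_pre => //; exact: gap_rec_meas. Qed.

Lemma Bgap_bound (tau0 : 0 < tau) dl Mr : 0 < dl ->
  (P (\big[setU/set0]_(z <- enum V) Bgap dl Mr z) <=
   (#|V|%:R * (Mr%:R * expR (- tau * dl)))%:E)%E.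
Proof.
move=> dl0; apply: le_trans; first by apply: P_bigU => z; apply: Bgap_meas.
rewrite cardT; apply: sum_le_const => z.
apply: le_trans; first by apply: P_bigU => n; apply: meas_pre => //; exact: gap_rec_meas.
apply: (sum_le_const2 (size_iota 0 Mr)) => n.
by rewrite P_gt_rec.
Qed.

Lemma Bblk_meas c L z b : measurable (Bblk c L z b).
Proof. by apply: bigsetI_measurable => n _; apply: meas_pre => //; exact: gap_rec_meas. Qed.

Lemma Bblk_bound (tau0 : 0 < tau) c L K : 0 < c ->
  (P (\big[setU/set0]_(z <- enum V) \big[setU/set0]_(b <- iota 0 K.+1) Bblk c L z b) <=
   (#|V|%:R * (K.+1%:R * (1 - expR (- tau * c)) ^+ L))%:E)%E.
Proof.
move=> c0; apply: le_trans; first apply: P_bigU.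
  by move=> z; apply: bigsetU_measurable => b _; apply: Bblk_meas.
rewrite cardT; apply: sum_le_const => z.
apply: le_trans; first by apply: P_bigU => b; apply: Bblk_meas.
apply: (sum_le_const2 (size_iota 0 K.+1)) => b.
rewrite /Bblk P_bigI //; last exact: iota_uniq.
under eq_bigr do rewrite (P_le_rec tau0 _ _ c0).
by rewrite -EFinB prod_constE size_iota.
Qed.

Section sums.
Variable f : nat -> R.
Hypothesis f0 : forall i, 0 <= f i.

Lemma S_ge0 n : 0 <= \sum_(i < n) f i.
Proof. by apply: sumr_ge0 => i _. Qed.

Lemma S_rec k : \sum_(i < k.+1) f i = \sum_(i < k) f i + f k.
Proof. by rewrite big_ord_recr. Qed.

Lemma S_mono k k' : (k <= k')%N -> \sum_(i < k) f i <= \sum_(i < k') f i.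
Proof.
move=> kk; rewrite !sum_ordE -(subnKC kk) iotaD big_cat /=.
by rewrite lerDl; apply: sumr_ge0.
Qed.

Lemma S_term_seq (s : seq nat) n : n \in s -> uniq s -> f n <= \sum_(i <- s) f i.
Proof.
move=> ns us; rewrite (bigD1_seq n) //= lerDl.
by apply: sumr_ge0.
Qed.

Lemma S_term n k : (n < k)%N -> f n <= \sum_(i < k) f i.
Proof.
by move=> nk; rewrite sum_ordE; apply: S_term_seq; rewrite ?iota_uniq // mem_iota.
Qed.

Lemma S_blocks (c : R) L B : (forall b, (b < B)%N -> exists m, (b * L <= m < b * L + L)%N /\ c < f m) ->
  B%:R * c <= \sum_(i < B * L) f i.
Proof.
elim: B => [|B IH] H; first by rewrite mul0r big_ord0.
rewrite mulSnr sum_ordE iotaD big_cat /= -sum_ordE add0n -natr1 mulrDl mul1r.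
apply: lerD; first by apply: IH => b bB; apply: H; apply: ltnW.
have [m [/andP[m1 m2] fm]] := H B (ltnSn B).
apply: le_trans (ltW fm) _; apply: S_term_seq; rewrite ?iota_uniq //.
by rewrite mem_iota m1 m2.
Qed.

End sums.

Lemma bigU_mem (I : eqType) (s : seq I) (F : I -> set Omega) w i :
  i \in s -> F i w -> (\big[setU/set0]_(i <- s) F i) w.
Proof.
elim: s => [|a s IH] //; rewrite in_cons big_cons => /orP [/eqP <-|Hs] Fw.
  by left.
by right; apply: IH.
Qed.

Lemma bigI_mem (I : Type) (s : seq I) (F : I -> set Omega) w :
  (forall i, List.In i s -> F i w) -> (\big[setI/setT]_(i <- s) F i) w.
Proof.
elim: s => [|a s IH] H; first by rewrite big_nil.
rewrite big_cons; split; first by apply: H; left.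
by apply: IH => i Hi; apply: H; right.
Qed.

Definition Bad (T dl c : R) N K L :=
  Bneg `|` \big[setU/set0]_(z <- enum V) Bcnt T N z
  `|` \big[setU/set0]_(z <- enum V) Bsame dl N z
  `|` Bdall T dl N
  `|` \big[setU/set0]_(z <- enum V) Bgap dl (K.+1 * L) z
  `|` \big[setU/set0]_(z <- enum V) \big[setU/set0]_(b <- iota 0 K.+1) Bblk c L z b.

Lemma zin (z : V) : z \in enum V.
Proof. by rewrite mem_enum. Qed.

Lemma good_of_notbad (T dl c : R) N K L w : 0 < T -> 0 < dl -> dl <= 1 -> 0 < c ->
  T < K.+1%:R * c -> ~ Bad T dl c N K L w -> good_event G T w.
Proof.
move=> T0 dl0 dl1 c0 Tc nB.
have nB0 : ~ Bneg w by move=> H; apply: nB; do 5 left.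
have nB1 : forall z, ~ Bcnt T N z w.
  by move=> z H; apply: nB; do 4 left; right; apply: (bigU_mem (i:=z)) => //; apply: zin.
have nB2 : forall z, ~ Bsame dl N z w.
  by move=> z H; apply: nB; do 3 left; right; apply: (bigU_mem (i:=z)) => //; apply: zin.
have nB3 : ~ Bdall T dl N w by move=> H; apply: nB; do 2 left; right.
have nB4 : forall z, ~ Bgap dl (K.+1 * L) z w.
  by move=> z H; apply: nB; left; right; apply: (bigU_mem (i:=z)) => //; apply: zin.
have nB5 : forall z b, (b < K.+1)%N -> ~ Bblk c L z b w.
  move=> z b hb H; apply: nB; right; apply: (bigU_mem (i:=z)); first exact: zin.
  by apply: (bigU_mem (i:=b)) => //; rewrite mem_iota.
have F0 : forall z n, 0 <= gap G (Onset z) n w /\ 0 <= gap G (Recov z) n w.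
  move=> z n; split; rewrite leNgt; apply/negP => H; apply: nB0; exists n => //;
    apply: (bigU_mem (i:=z)); rewrite ?zin //; [left|right];
    by rewrite /negR /= in_itv /= H.
have F0o z n : 0 <= gap G (Onset z) n w by case: (F0 z n).
have F0r z n : 0 <= gap G (Recov z) n w by case: (F0 z n).
have F1 : forall z, T + 1 < arrival G (Onset z) N w.
  move=> z; rewrite ltNge; apply/negP => H; apply: (nB1 z); apply: bigI_mem => n /In_mem.
  rewrite mem_iota add0n => /andP[_ hn] /=; rewrite in_itv /=.
  apply: le_trans H; rewrite /arrival.
  exact: (S_term (f := fun i => gap G (Onset z) i w)).
have F2 : forall z n, (n <= N)%N -> dl < gap G (Onset z) n w.
  move=> z n hn; rewrite ltNge; apply/negP => H; apply: (nB2 z).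
  by apply: (bigU_mem (i:=n)); rewrite ?mem_iota //= in_itv /= H.
have F4 : forall z m, (m < K.+1 * L)%N -> gap G (Recov z) m w <= dl.
  move=> z m hm; rewrite leNgt; apply/negP => H; apply: (nB4 z).
  by apply: (bigU_mem (i:=m)); rewrite ?mem_iota //= in_itv /= H.
have F5 : forall z b, (b < K.+1)%N -> exists m, (b * L <= m < b * L + L)%N /\ c < gap G (Recov z) m w.
  move=> z b hb; case: (pselect (exists m, (b * L <= m < b * L + L)%N /\ c < gap G (Recov z) m w)) => // Hn.
  exfalso; apply: (nB5 z b hb); apply: bigI_mem => m /In_mem; rewrite mem_iota => hm /=.
  rewrite in_itv /= leNgt; apply/negP => hc; apply: Hn; exists m; split => //.
have arrmono : forall l (Hl : forall n, 0 <= gap G l n w) k k', (k <= k')%N ->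
    arrival G l k w <= arrival G l k' w.
  by move=> l Hl k k' kk; rewrite /arrival; apply: (S_mono (f := fun i => gap G l i w)).
have idxN : forall z (j : nat) (s : R), arrival G (Onset z) j w = s -> s <= T + 1 -> (j < N)%N.
  move=> z j s Hj sT; rewrite ltnNge; apply/negP => Nj.
  have := F1 z; have := arrmono _ (F0o z) _ _ Nj; rewrite Hj; lra.
move=> x t tT [k Hk].
have kN : (k < N)%N by apply: (idxN x k t) => //; lra.
have Lpos : (0 < L)%N.
  by have [m [/andP[_ hm] _]] := F5 x 0%N (ltn0Sn K); move: hm; rewrite mul0n add0n; apply: leq_ltn_trans.
have ML : (0 < K.+1 * L)%N by rewrite muln_gt0.
have ex : exists m, t < arrival G (Recov x) m w.
  exists (K.+1 * L).-1; rewrite /arrival prednK //.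
  apply: lt_le_trans (S_blocks (f := fun i => gap G (Recov x) i w) (F0r x) (F5 x)).
  lra.
case: (ex_minnP ex) => m0 Hm0 Hmin.
have m0M : (m0 < K.+1 * L)%N.
  apply: leq_ltn_trans (Hmin (K.+1 * L).-1 _) _; last by rewrite prednK.
  rewrite /arrival prednK //.
  apply: lt_le_trans (S_blocks (f := fun i => gap G (Recov x) i w) (F0r x) (F5 x)).
  lra.
have t0 : 0 <= t by rewrite -Hk /arrival; apply: (S_ge0 (f := fun i => gap G (Onset x) i w)) => i; apply: F0o.
have gle : arrival G (Recov x) m0 w <= t + dl.
  move: Hm0 Hmin m0M; case: m0 => [|m] Hm0 Hmin m0M.
    rewrite /arrival big_ord1; have := F4 x 0%N m0M; lra.
  rewrite /arrival (S_rec (fun i => gap G (Recov x) i w)) -/(arrival G (Recov x) m w).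
  have : arrival G (Recov x) m w <= t.
    by rewrite leNgt; apply/negP => /Hmin; rewrite ltnn.
  have := F4 x m.+1 m0M; lra.
exists (arrival G (Recov x) m0 w); split => //; split; first by exists m0.
move=> y s ts st [j Hj].
have jN : (j < N)%N by apply: (idxN y j s) => //; lra.
case: (eqVneq x y) => [Exy|xy].
  subst y; case: (leqP j k) => jk.
    by have := arrmono _ (F0o x) _ _ jk; rewrite Hj Hk; lra.
  move: jk Hj; case: j jN => [//|j'] jN jk Hj.
  have h2 := F2 x j'.+1 (ltnW jN).
  have h1 := arrmono _ (F0o x) k j' jk; rewrite Hk in h1.
  have h3 : arrival G (Onset x) j'.+1 w = arrival G (Onset x) j' w + gap G (Onset x) j'.+1 w.
    by rewrite /arrival (S_rec (fun i => gap G (Onset x) i w)).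
  lra.
apply: nB3.
apply: (bigU_mem (i:=x)); first exact: zin.
apply: (bigU_mem (i:=y)); first exact: zin.
apply: (bigU_mem (i:=k)); first by rewrite mem_iota.
apply: (bigU_mem (i:=j)); first by rewrite mem_iota.
rewrite (negbTE xy).
set S := \sum_(i < j) gap G (Onset y) i w.
have S0 : 0 <= S by apply: (S_ge0 (f := fun i => gap G (Onset y) i w)) => i; apply: F0o.
have Hj' : S + gap G (Onset y) j w = s by rewrite -Hj /arrival (S_rec (fun i => gap G (Onset y) i w)).
have g0 := F0o y j.
set W := t - S.
have EW : W = t - S by [].
have sT1 : s <= T + 1 by lra.
have HW : Wd x k y j w = W by rewrite /Wd Hk.
set v := (W + (T + 1)) / dl.
have Ev : v = (W + (T + 1)) / dl by [].
have v0 : 0 <= v by rewrite /v divr_ge0 //; lra.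
have [hm1 hm2] := andP (truncn_itv v0).
set m := Num.truncn v.
have Em : m = Num.truncn v by [].
have hmM : (m < Mcells T dl)%N.
  rewrite /Mcells ltnS; apply: le_truncn.
  by rewrite /v ler_pM2r ?invr_gt0 //; lra.
apply: (bigU_mem (i := Ordinal hmM)); first exact: mem_index_enum.
have e1 : m%:R * dl <= W + (T + 1) by rewrite -ler_pdivlMr.
have e2 : W + (T + 1) < m.+1%:R * dl by rewrite -ltr_pdivrMr.
move: e2; rewrite -natr1 mulrDl mul1r => e2.
split; rewrite /preimage /cell /Icell /= ?HW in_itv /=; apply/andP; split; lra.
Qed.

Lemma Bad_meas T dl c N K L : measurable (Bad T dl c N K L).
Proof.
rewrite /Bad; repeat apply: measurableU.
- exact: Bneg_meas.
- by apply: bigsetU_measurable => z _; apply: Bcnt_meas.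
- by apply: bigsetU_measurable => z _; apply: Bsame_meas.
- exact: Bdall_meas.
- by apply: bigsetU_measurable => z _; apply: Bgap_meas.
- by apply: bigsetU_measurable => z _; apply: bigsetU_measurable => b _; apply: Bblk_meas.
Qed.

Lemma P_Bad (tau0 : 0 < tau) T dl c N K L : 0 < T -> 0 < dl -> 0 < c ->
  (P (Bad T dl c N K L) <=
   (#|V|%:R * (1 - expR (- (T + 1))) ^+ N.+1
    + #|V|%:R * (N.+1%:R * dl)
    + #|V|%:R * (#|V|%:R * (N%:R * (N%:R * (3 * dl))))
    + #|V|%:R * ((K.+1 * L)%:R * expR (- tau * dl))
    + #|V|%:R * (K.+1%:R * (1 - expR (- tau * c)) ^+ L))%:E)%E.
Proof.
move=> T0 dl0 c0.
have m0 := Bneg_meas.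
have m1 : measurable (\big[setU/set0]_(z <- enum V) Bcnt T N z).
  by apply: bigsetU_measurable => z _; apply: Bcnt_meas.
have m2 : measurable (\big[setU/set0]_(z <- enum V) Bsame dl N z).
  by apply: bigsetU_measurable => z _; apply: Bsame_meas.
have m3 := Bdall_meas T dl N.
have m4 : measurable (\big[setU/set0]_(z <- enum V) Bgap dl (K.+1 * L) z).
  by apply: bigsetU_measurable => z _; apply: Bgap_meas.
have m5 : measurable (\big[setU/set0]_(z <- enum V) \big[setU/set0]_(b <- iota 0 K.+1) Bblk c L z b).
  by apply: bigsetU_measurable => z _; apply: bigsetU_measurable => b _; apply: Bblk_meas.
rewrite /Bad.
apply: le_trans; first (apply: PU2 => //; repeat apply: measurableU => //).
rewrite EFinD; apply: leeD; last exact: Bblk_bound.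
apply: le_trans; first (apply: PU2 => //; repeat apply: measurableU => //).
rewrite EFinD; apply: leeD; last exact: Bgap_bound.
apply: le_trans; first (apply: PU2 => //; repeat apply: measurableU => //).
rewrite EFinD; apply: leeD; last exact: Bdall_bound.
apply: le_trans; first (apply: PU2 => //; repeat apply: measurableU => //).
rewrite EFinD; apply: leeD; last exact: Bsame_bound.
apply: le_trans; first (apply: PU2 => //; repeat apply: measurableU => //).
by rewrite Bneg_null add0e; apply: Bcnt_bound.
Qed.

End main.

Theorem lemma1 (R : realType) (V : finType) (Ed : {set {set V}})
  (HEd : forall e, e \in Ed -> #|e| = 2%N) (lam : R) (Hlam : 0 < lam)
  (T : R) (HT : 0 < T) :
  forall eps : R, 0 < eps ->
  exists tau0 : R, forall tau : R, tau0 <= tau -> 0 < tau ->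
  forall (d : measure_display) (Omega : measurableType d)
         (P : probability Omega R) (G : graphical_rep P Ed lam tau),
  exists A : set Omega, measurable A /\ A `<=` good_event G T /\
    ((1 - eps)%:E <= P A)%E.
Proof.
move=> eps eps0.
set n0 : R := #|V|%:R.
have n00 : 0 <= n0 by [].
set e5 := eps / 5.
have e50 : 0 < e5 by rewrite /e5 divr_gt0.
set p := expR (- (T + 1)).
have p0 : 0 < p by apply: expR_gt0.
have p1 : p <= 1 by rewrite /p expR_le1; lra.
set N := Num.truncn (n0 / (e5 * p)).
set D := n0 * N.+1%:R + n0 * (n0 * (N%:R * (N%:R * 3))).
have D0 : 0 <= D by rewrite /D addr_ge0 // !mulr_ge0.
set dl := e5 / (D + e5).
have dl0 : 0 < dl by rewrite /dl divr_gt0 //; lra.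
have dl1 : dl <= 1 by rewrite /dl ler_pdivrMr; lra.
set K := Num.truncn (2 * T / dl).
set c := dl / 2.
have c0 : 0 < c by rewrite /c divr_gt0.
have Tc : T < K.+1%:R * c.
  have := truncnS_gt (2 * T / dl); rewrite -/K ltr_pdivrMr // => h.
  rewrite /c mulrA ltr_pdivlMr //; lra.
set Z := 2 * (n0 * K.+1%:R) / e5.
exists (4 * Z / dl) => tau htau tau0 d Omega P G.
set u := expR (tau * dl / 4).
set L := (Num.truncn (u ^+ 3)).+1.
exists (~` Bad G T dl c N K L); split; first exact/measurableC/Bad_meas.
split.
  by move=> w nB; apply: (good_of_notbad HT dl0 dl1 c0 Tc nB).
rewrite probability_setC; last exact: Bad_meas.
have hB := P_Bad G tau0 N K L HT dl0 c0.
rewrite -/n0 -/p in hB.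
have H1 : n0 * (1 - p) ^+ N.+1 <= e5 by apply: arith1.
have H23 : n0 * (N.+1%:R * dl) + n0 * (n0 * (N%:R * (N%:R * (3 * dl)))) <= e5.
  have -> : n0 * (N.+1%:R * dl) + n0 * (n0 * (N%:R * (N%:R * (3 * dl)))) = dl * D.
    by rewrite /D; ring.
  by apply: arith23.
have u1 : 1 <= u.
  by rewrite /u; apply: le_trans (expR_ge1Dx _); rewrite lerDl; apply: divr_ge0; [apply: mulr_ge0; lra|].
have uZ : Z <= u.
  rewrite /u; apply: le_trans (expR_ge1Dx _).
  have : 4 * Z / dl * dl <= tau * dl by apply: ler_wpM2r => //; lra.
  rewrite divfK; last by apply: lt0r_neq0.
  lra.
have hA : 2 * (n0 * K.+1%:R) <= e5 * u.
  by move: uZ; rewrite /Z ler_pdivrMr // [u * _]mulrC.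
have hA0 : 0 <= n0 * K.+1%:R by apply: mulr_ge0.
have H4 : n0 * ((K.+1 * L)%:R * expR (- tau * dl)) <= e5.
  rewrite natrM mulrA (mulrA n0).
  have hE0 : 0 <= expR (- tau * dl) by apply: ltW; apply: expR_gt0.
  have hEq : u ^+ 3 * expR (- tau * dl) * u = 1.
    have -> : u ^+ 3 * expR (- tau * dl) * u = u ^+ 4 * expR (- tau * dl).
      by rewrite [u ^+ 4]exprS; ring.
    rewrite /u -expRM_natl -expRD; apply: (@eq_trans _ _ (expR 0)); last exact: expR0.
    by congr expR; field.
  have hL : L%:R <= u ^+ 3 + 1.
    rewrite /L -natr1 lerD2r truncn_le; apply: exprn_ge0; lra.
  exact: (arith4 hA0 hE0 u1 hEq hL hA).
have H5 : n0 * (K.+1%:R * (1 - expR (- tau * c)) ^+ L) <= e5.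
  rewrite mulrA.
  have q0 : 0 <= expR (- tau * c) by apply: ltW; apply: expR_gt0.
  have q1 : expR (- tau * c) <= 1 by rewrite expR_le1 mulNr oppr_le0 mulr_ge0 // ltW.
  have Y0 : 0 <= (1 - expR (- tau * c)) ^+ L by apply: exprn_ge0; lra.
  have hq : expR (- tau * c) * u ^+ 2 = 1.
    rewrite /u -expRM_natl -expRD; apply: (@eq_trans _ _ (expR 0)); last exact: expR0.
    by congr expR; rewrite /c; field.
  have hL : u ^+ 3 < L%:R by rewrite /L; apply: truncnS_gt.
  have hY := bern L q0 q1.
  exact: (arith5 hA0 Y0 q0 u1 hq hL hY hA).
have hs : (1 - eps <= 1 - fine (P (Bad G T dl c N K L)))%R.
  have := hB; rewrite -(P_fin _ (Bad_meas G T dl c N K L)) lee_fin.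
  rewrite /e5 in H1 H23 H4 H5; move=> hB'.
  exact: (fin_arith eps0 H1 H23 H4 H5 hB').
by rewrite -(P_fin _ (Bad_meas G T dl c N K L)) -EFinB lee_fin.
Qed.
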